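(* Let ${\boldsymbol\pi}$ be a permuton and let $\{\sigma_n\}_{n\in\mathbb N}$ be a sequence of permutations with $|\sigma_n|\to\infty$ whose associated permutons ${\boldsymbol\pi}_{\sigma_n}$ converge weakly to ${\boldsymbol\pi}$. Assume that ${\boldsymbol\pi}(A)=0$ for every monotone set $A\subset[0,1]^2$. Then $\operatorname{LIS}(\sigma_n)/|\sigma_n|\to0$.
   Context: A permuton is a Borel probability measure on $[0,1]^2$ with both marginals equal to Lebesgue measure on $[0,1]$. For a permutation $\sigma$ of size $n$, ${\boldsymbol\pi}_\sigma$ is $n$ times Lebesgue measure on $\bigcup_{j=1}^n[\frac{j-1}{n},\frac jn]\times[\frac{\sigma(j)-1}{n},\frac{\sigma(j)}{n}]$. A set $A\subset[0,1]^2$ is monotone if $A\subset([0,t]\times[0,s])\cup([t,1]\times[s,1])$ for every $(t,s)\in A$. $\operatorname{LIS}(\sigma)$ is the maximal cardinality of a set of indices on which $\sigma$ is increasing. *)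

(* Defs.v *)
From HB Require Import structures.
From mathcomp Require Import all_boot all_order all_algebra all_fingroup.
From mathcomp Require Import all_classical all_reals all_analysis.
Set Implicit Arguments. Unset Strict Implicit. Unset Printing Implicit Defensive.
Import Order.TTheory GRing.Theory Num.Theory.
Import numFieldNormedType.Exports.
Local Open Scope classical_set_scope.
Local Open Scope ring_scope.

(* The world: MathComp + MathComp-Analysis.  Measures on [0,1]^2 are
   represented as measures on the (Borel) product measurable space R * R. *)

Definition R2 (R : realType) := (measurableTypeR R * measurableTypeR R)%type.

Definition unit_square (R : realType) : set (R2 R) := `[0, 1]%classic `*` `[0, 1]%classic.

Definition is_permuton (R : realType)
  (mu : {measure set (R2 R) -> \bar R}) : Prop :=
  (forall A : set (measurableTypeR R), measurable A ->
     mu (A `*` setT) = (@lebesgue_measure R) (A `&` `[0, 1]%classic)) /\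
  (forall A : set (measurableTypeR R), measurable A ->
     mu (setT `*` A) = (@lebesgue_measure R) (A `&` `[0, 1]%classic)).

(* the square [j/n,(j+1)/n] x [s(j)/n,(s(j)+1)/n] (0-based indices) *)
Definition perm_square (R : realType) (n : nat) (s : 'S_n) (j : 'I_n) : set (R2 R) :=
  `[(j%:R / n%:R), (j.+1%:R / n%:R)]%classic `*`
  `[((s j)%:R / n%:R), ((s j).+1%:R / n%:R)]%classic.

Definition perm_support (R : realType) (n : nat) (s : 'S_n) : set (R2 R) :=
  \big[setU/set0]_(j < n) @perm_square R n s j.

Lemma measurable_perm_support (R : realType) (n : nat) (s : 'S_n) :
  measurable (@perm_support R n s).
Proof.
rewrite /perm_support; apply: bigsetU_measurable => j _.
by apply: measurableX; exact: measurable_itv.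
Qed.

Definition leb2 (R : realType) := ((@lebesgue_measure R) \x (@lebesgue_measure R))%E.

Definition perm_permuton (R : realType) (n : nat) (s : 'S_n) :
    {measure set (R2 R) -> \bar R} :=
  mscale (n%:R)%:nng (mrestr (@leb2 R) (@measurable_perm_support R n s)).

Definition weak_cvg (R : realType)
  (mu_ : nat -> {measure set (R2 R) -> \bar R})
  (mu : {measure set (R2 R) -> \bar R}) : Prop :=
  forall f : (R * R)%type -> R,
    {within (@unit_square R : set (R * R)%type), continuous f} ->
    ((fun k => \int[mu_ k]_(x in @unit_square R) (f x)%:E) @ \oo -->
      \int[mu]_(x in @unit_square R) (f x)%:E)%E.

Definition monotone_set (R : realType) (A : set (R2 R)) : Prop :=
  A `<=` @unit_square R /\
  forall t s : R, A (t, s) ->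
    A `<=` (`[0, t]%classic `*` `[0, s]%classic) `|` (`[t, 1]%classic `*` `[s, 1]%classic).

Definition incr_on (n : nat) (s : 'S_n) (I : {set 'I_n}) : bool :=
  [forall i in I, forall j in I, (i < j)%N ==> (s i < s j)%N].

Definition LIS (n : nat) (s : 'S_n) : nat :=
  \max_(I : {set 'I_n} | incr_on s I) #|I|.

(* Main.v *)
Require Import Defs.
From HB Require Import structures.
From mathcomp Require Import all_boot all_order all_algebra all_fingroup.
From mathcomp Require Import all_classical all_reals all_analysis measurable_realfun.
From mathcomp Require Import ring lra.
Import Order.TTheory GRing.Theory Num.Theory.
Import numFieldNormedType.Exports.
Local Open Scope classical_set_scope.
Local Open Scope ring_scope.
Set Implicit Arguments. Unset Strict Implicit. Unset Printing Implicit Defensive.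
Definition infinite_nat (B : nat -> Prop) := forall n, exists k, (n <= k)%N /\ B k.

Lemma pigeon (T : finType) (B : nat -> Prop) (F : nat -> T) :
  infinite_nat B -> exists t, infinite_nat (fun k => B k /\ F k = t).
Proof.
move=> hB; apply: contrapT => /forallNP H.
have H' : forall t, exists n, forall k, (n <= k)%N -> ~ (B k /\ F k = t).
  move=> t; have /existsNP [n /forallNP Hn] := H t.
  by exists n => k nk Bk; apply: (Hn k); split.
have [g Hg] := choice H'.
have [k [nk Bk]] := hB (\max_(t : T) g t).
apply: (Hg (F k) k) => //.
by apply: leq_trans nk; apply: leq_bigmax.
Qed.

Section Chain.
Variables (T : nat -> finType) (F : forall m, nat -> T m).
Variable B0 : {B : nat -> Prop | infinite_nat B}.

Definition refine m (B : {B : nat -> Prop | infinite_nat B}) :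
  {B' : nat -> Prop | infinite_nat B'} :=
  let c := cid (@pigeon (T m) (sval B) (F m) (svalP B)) in
  exist _ (fun k => sval B k /\ F m k = sval c) (svalP c).

Fixpoint Bs (m : nat) : {B : nat -> Prop | infinite_nat B} :=
  match m with 0 => refine 0 B0 | m'.+1 => refine m'.+1 (Bs m') end.

Lemma Bs_le j m k : (j <= m)%N -> sval (Bs m) k -> sval (Bs j) k.
Proof.
elim: m => [|m IH]; first by rewrite leqn0 => /eqP ->.
rewrite leq_eqVlt => /orP [/eqP -> //| jm] /= [Hk _].
by apply: IH.
Qed.

Lemma Bs_B0 m k : sval (Bs m) k -> sval B0 k.
Proof.
move=> /(@Bs_le 0 m k (leq0n m)); by case.
Qed.

Lemma Bs_const m k k' : sval (Bs m) k -> sval (Bs m) k' -> F m k = F m k'.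
Proof. by case: m => [|m] /= [_ ->] [_ ->]. Qed.

End Chain.

Lemma chain_lemma (T : nat -> finType) (F : forall m, nat -> T m)
  (B : nat -> Prop) : infinite_nat B ->
  exists S : forall m, T m, forall m,
    infinite_nat (fun k => B k /\ forall j, (j <= m)%N -> F j k = S j).
Proof.
move=> hB; pose B0 := exist infinite_nat B hB.
pose xk m := sval (cid (svalP (@Bs T F B0 m) 0)).
have xkP m : sval (@Bs T F B0 m) (xk m) by rewrite /xk; case: cid => /= x [].
exists (fun m => F m (xk m)) => m n.
have [k [nk Hk]] := svalP (@Bs T F B0 m) n.
exists k; split => //; split; first exact: (@Bs_B0 T F B0 m k Hk).
move=> j jm; apply: (@Bs_const T F B0 j); first exact: (@Bs_le T F B0 j m k jm Hk).
exact: xkP.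
Qed.

Lemma cell_lt m {n} (i : 'I_n) : ((2^m * i) %/ n < 2^m)%N.
Proof.
have n0 : (0 < n)%N by apply: leq_ltn_trans (ltn_ord i).
by rewrite ltn_divLR // ltn_pmul2l ?expn_gt0.
Qed.

Definition cell_of m {n} (i : 'I_n) : 'I_(2^m) := Ordinal (cell_lt m i).

Lemma incr_set0 n (s : 'S_n) : incr_on s (finset.set0 : {set 'I_n}).
Proof. by apply/forallP => i; apply/implyP; rewrite inE. Qed.

Lemma card_incr_gt0 n (s : 'S_n) : (0 < #|[pred I : {set 'I_n} | incr_on s I]|)%N.
Proof. by apply/card_gt0P; exists (finset.set0 : {set 'I_n}); rewrite inE incr_set0. Qed.

Definition Imax {n} (s : 'S_n) : {set 'I_n} :=
  s2val (eq_bigmax_cond (fun I : {set 'I_n} => #|I|) (card_incr_gt0 s)).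

Lemma ImaxP n (s : 'S_n) : incr_on s (Imax s) /\ LIS s = #|Imax s|.
Proof.
rewrite /Imax; case: eq_bigmax_cond => I /= HI HE; split.
  by move: HI; rewrite inE.
by rewrite -HE /LIS; apply: eq_bigl => J; rewrite inE.
Qed.

Definition cells m {n} (s : 'S_n) : {set 'I_(2^m) * 'I_(2^m)} :=
  [set (cell_of m i, cell_of m (s i)) | i in Imax s].

Lemma div_half m n x : ((2^m.+1 * x) %/ n %/ 2 = (2^m * x) %/ n)%N.
Proof.
by rewrite -divnMA expnS -mulnA [(n * 2)%N]mulnC divnMl.
Qed.

Lemma cells_parent m n (s : 'S_n) c : c \in cells m.+1 s ->
  exists2 c0, c0 \in cells m s &
    (nat_of_ord c0.1 = c.1 %/ 2 /\ nat_of_ord c0.2 = c.2 %/ 2)%N.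
Proof.
case/imsetP => i Ii ->; exists (cell_of m i, cell_of m (s i)).
  by apply/imsetP; exists i.
by rewrite /= !div_half.
Qed.

Lemma cells_ord m n (s : 'S_n) c c' : c \in cells m s -> c' \in cells m s ->
  ((c.1 <= c'.1 /\ c.2 <= c'.2) \/ (c'.1 <= c.1 /\ c'.2 <= c.2))%N.
Proof.
have [incr _] := ImaxP s.
have key i j : i \in Imax s -> j \in Imax s -> (i <= j)%N -> (s i <= s j)%N.
  move=> Ii Ij; rewrite leq_eqVlt => /orP [/eqP/val_inj -> //| ij].
  by apply: ltnW; move/forallP: incr => /(_ i) /implyP /(_ Ii) /forallP
    /(_ j) /implyP /(_ Ij) /implyP; apply.
case/imsetP => i Ii ->; case/imsetP => j Ij -> /=.
have mono a b : (a <= b)%N -> ((2^m * a) %/ n <= (2^m * b) %/ n)%N.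
  by move=> ab; apply: leq_div2r; rewrite leq_mul2l ab orbT.
have [ij|ji] := leqP i j.
  by left; split; apply: mono => //; apply: key.
by right; split; apply: mono => //; [apply: ltnW|apply: key => //; apply: ltnW].
Qed.
Lemma in_bigsetU (T : Type) (I : eqType) (r : seq I) (P : pred I) (F : I -> set T) z :
  (\big[setU/set0]_(i <- r | P i) F i) z <-> exists i, [/\ i \in r, P i & F i z].
Proof.
elim: r => [|x r IH]; first by rewrite big_nil; split => // -[i []].
rewrite big_cons; case: ifP => Px; split.
- case=> [Fx|/IH [i [ir Pi Fi]]]; first by exists x; rewrite mem_head.
  by exists i; rewrite in_cons ir orbT.
- case=> i []; rewrite in_cons => /orP [/eqP -> _ Fx|ir Pi Fi]; first by left.
  by right; apply/IH; exists i.
- by move/IH => [i [ir Pi Fi]]; exists i; rewrite in_cons ir orbT.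
- case=> i []; rewrite in_cons => /orP [/eqP -> |ir Pi Fi]; first by rewrite Px.
  by apply/IH; exists i.
Qed.

Lemma in_bigsetU_fin (T : Type) (I : finType) (S : {set I}) (F : I -> set T) z :
  (\big[setU/set0]_(i in S) F i) z <-> exists2 i, i \in S & F i z.
Proof.
rewrite in_bigsetU; split => [[i [_ Si Fi]]|[i Si Fi]]; first by exists i.
by exists i; rewrite mem_index_enum.
Qed.

Section Geom.
Variable R : realType.

Definition rect m (a b : nat) : set (R2 R) :=
  `[(a%:R - 1) / (2^m)%:R, (a%:R + 2) / (2^m)%:R]%classic `*`
  `[(b%:R - 1) / (2^m)%:R, (b%:R + 2) / (2^m)%:R]%classic.

Definition thick m (S : {set 'I_(2^m) * 'I_(2^m)}) : set (R2 R) :=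
  \big[setU/set0]_(c in S) rect m c.1 c.2.

Arguments rect m a b : clear implicits.
Arguments thick m S : clear implicits.

Lemma measurable_thick m S : measurable (thick m S).
Proof.
rewrite /thick; apply: bigsetU_measurable => c _.
by apply: measurableX; exact: measurable_itv.
Qed.

Lemma M_gt0 m : 0 < (2^m)%:R :> R.
Proof. by rewrite ltr0n expn_gt0. Qed.

Lemma le_div2 (M p q : R) : 0 < M -> 2 * p <= q -> p / M <= q / (2 * M).
Proof.
move=> M0 pq; have -> : p / M = (2 * p) / (2 * M).
  by rewrite invfM mulrACA divff ?mul1r // pnatr_eq0.
by apply: ler_wpM2r => //; rewrite invr_ge0 mulr_ge0 // ltW.
Qed.

Lemma le_div2' (M p q : R) : 0 < M -> q <= 2 * p -> q / (2 * M) <= p / M.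
Proof.
move=> M0 pq; have -> : p / M = (2 * p) / (2 * M).
  by rewrite invfM mulrACA divff ?mul1r // pnatr_eq0.
by apply: ler_wpM2r => //; rewrite invr_ge0 mulr_ge0 // ltW.
Qed.

Lemma rect_nest m (a b : nat) : rect m.+1 a b `<=` rect m (a %/ 2) (b %/ 2).
Proof.
have M0 := M_gt0 m.
have E : (2^m.+1)%:R = 2 * (2^m)%:R :> R by rewrite expnS natrM.
have key (x : nat) : (2 * ((x %/ 2)%:R - 1) <= x%:R - 1 :> R) /\ (x%:R + 2 <= 2 * ((x %/ 2)%:R + 2) :> R).
  have xE : x%:R = 2 * (x %/ 2)%:R + (x %% 2)%:R :> R.
    by rewrite {1}(divn_eq x 2) natrD natrM mulrC.
  have r1 : (x %% 2)%:R <= 1%:R :> R by rewrite ler_nat -ltnS ltn_pmod.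
  have r0 : 0 <= (x %% 2)%:R :> R by [].
  by rewrite xE; split; lra.
move=> [x y] [] /= hx hy; move: hx hy; rewrite !in_itv /= => /andP [x1 x2] /andP [y1 y2].
rewrite E in x1 x2 y1 y2.
have [ka kb] := key a; have [kc kd] := key b.
split => /=; rewrite in_itv /=; apply/andP; split.
- exact: le_trans (le_div2 M0 ka) x1.
- exact: le_trans x2 (le_div2' M0 kb).
- exact: le_trans (le_div2 M0 kc) y1.
- exact: le_trans y2 (le_div2' M0 kd).
Qed.

Lemma thick_nest m (S : {set 'I_(2^m.+1) * 'I_(2^m.+1)})
    (S0 : {set 'I_(2^m) * 'I_(2^m)}) :
  (forall c, c \in S -> exists2 c0, c0 \in S0 &
    (nat_of_ord c0.1 = c.1 %/ 2 /\ nat_of_ord c0.2 = c.2 %/ 2)%N) ->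
  thick m.+1 S `<=` thick m S0.
Proof.
move=> H z /in_bigsetU_fin [c cS zc]; have [c0 c0S [e1 e2]] := H c cS.
apply/in_bigsetU_fin; exists c0 => //; rewrite e1 e2.
exact: rect_nest.
Qed.

Lemma rect_bounds m a b z : rect m a b z ->
  [/\ a%:R - 1 <= (2^m)%:R * z.1, (2^m)%:R * z.1 <= a%:R + 2,
      b%:R - 1 <= (2^m)%:R * z.2 & (2^m)%:R * z.2 <= b%:R + 2].
Proof.
have M0 := M_gt0 m.
case: z => x y [] /=; rewrite !in_itv /= => /andP [x1 x2] /andP [y1 y2].
rewrite ler_pdivrMr // in x1; rewrite ler_pdivlMr // in x2.
rewrite ler_pdivrMr // in y1; rewrite ler_pdivlMr // in y2.
by split; rewrite mulrC.
Qed.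

Lemma thick_ord m (S : {set 'I_(2^m) * 'I_(2^m)}) :
  (forall c c', c \in S -> c' \in S ->
    ((c.1 <= c'.1 /\ c.2 <= c'.2) \/ (c'.1 <= c.1 /\ c'.2 <= c.2))%N) ->
  forall z z', thick m S z -> thick m S z' ->
  ((2^m)%:R * (z.1 - z'.1) <= 3 /\ (2^m)%:R * (z.2 - z'.2) <= 3) \/
  ((2^m)%:R * (z'.1 - z.1) <= 3 /\ (2^m)%:R * (z'.2 - z.2) <= 3).
Proof.
move=> Hord z z' /in_bigsetU_fin [c cS zc] /in_bigsetU_fin [c' c'S zc'].
have [a1 a2 b1 b2] := rect_bounds zc; have [a1' a2' b1' b2'] := rect_bounds zc'.
rewrite !mulrBr.
case: (Hord c c' cS c'S) => [[h1 h2]|[h1 h2]].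
  have h1' : (c.1 : nat)%:R <= (c'.1 : nat)%:R :> R by rewrite ler_nat.
  have h2' : (c.2 : nat)%:R <= (c'.2 : nat)%:R :> R by rewrite ler_nat.
  by left; split; lra.
have h1' : (c'.1 : nat)%:R <= (c.1 : nat)%:R :> R by rewrite ler_nat.
have h2' : (c'.2 : nat)%:R <= (c.2 : nat)%:R :> R by rewrite ler_nat.
by right; split; lra.
Qed.

Lemma exists_big_pow (x : R) : exists m, x < (2^m)%:R.
Proof.
have [x0|x0] := leP 0 x; last by exists 0%N; apply: lt_le_trans x0 _.
exists (Num.Def.archi_bound x); apply: lt_le_trans (archi_boundP x0) _.
by rewrite ler_nat; apply: ltnW; apply: ltn_expl.
Qed.

Lemma final_ord (x y : R) :
  (forall m, ((2^m)%:R * x <= 3 /\ (2^m)%:R * y <= 3) \/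
             ((2^m)%:R * (- x) <= 3 /\ (2^m)%:R * (- y) <= 3)) ->
  (0 <= x /\ 0 <= y) \/ (x <= 0 /\ y <= 0).
Proof.
move=> H.
have L (p q : R) : 0 < p -> 0 < q ->
    (forall m, (2^m)%:R * p <= 3 \/ (2^m)%:R * q <= 3) -> False.
  move=> p0 q0 Hm; pose d := Num.min p q.
  have d0 : 0 < d by rewrite lt_min p0 q0.
  have [m Hm'] := exists_big_pow (3 / d).
  have Mm := M_gt0 m.
  have Md : 3 < (2^m)%:R * d by rewrite -ltr_pdivrMr // mulrC.
  have dp : d <= p by rewrite ge_min lexx.
  have dq : d <= q by rewrite ge_min lexx orbT.
  case: (Hm m) => h.
    have : (2^m)%:R * d <= (2^m)%:R * p by rewrite ler_pM2l.
    lra.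
  have : (2^m)%:R * d <= (2^m)%:R * q by rewrite ler_pM2l.
  lra.
have [x0|x0] := leP 0 x; have [y0|y0] := leP 0 y.
- by left.
- have [->|xn0] := eqVneq x 0; first by right; split => //; apply: ltW.
  exfalso; apply: (L x (- y)); first by rewrite lt_neqAle eq_sym xn0.
    by rewrite oppr_gt0.
  by move=> m; case: (H m) => -[h1 h2]; [left|right].
- have [->|yn0] := eqVneq y 0; first by right; split => //; apply: ltW.
  exfalso; apply: (L (- x) y); first by rewrite oppr_gt0.
    by rewrite lt_neqAle eq_sym yn0.
  by move=> m; case: (H m) => -[h1 h2]; [right|left].
- by right; split; apply: ltW.
Qed.
End Geom.
Arguments rect {R} m a b.
Arguments thick {R} m S.

Section Funs.
Variable R : realType.

Definition hf (u : R) : R :=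
  Num.max 0 (Num.min 1 (Num.min (2 * (u + 1)) (2 * (2 - u)))).

Lemma hf_ge0 u : 0 <= hf u.
Proof. by rewrite /hf le_max lexx. Qed.

Lemma hf_le1 u : hf u <= 1.
Proof. by rewrite /hf ge_max ler01 /= ge_min lexx. Qed.

Lemma hf_out u : hf u != 0 -> -1 <= u <= 2.
Proof.
apply: contraR => H; rewrite /hf; apply/eqP/max_idPl.
rewrite ge_min; apply/orP; right; rewrite ge_min; apply/orP.
move: H; rewrite negb_and -!ltNge => /orP [h|h]; [left|right]; lra.
Qed.

Lemma hf_one u : -1/2 <= u -> u <= 3/2 -> hf u = 1.
Proof.
move=> h1 h2; rewrite /hf; have -> : Num.min 1 (Num.min (2 * (u + 1)) (2 * (2 - u))) = 1.
  by apply/min_idPl; rewrite le_min; apply/andP; split; lra.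
by apply/max_idPr; rewrite ler01.
Qed.

Lemma affine_continuous (a b : R) : continuous (fun u : R => a * u + b).
Proof.
move=> x; apply: continuousD; last exact: cst_continuous.
by apply: continuousM; [exact: cst_continuous|exact: cvg_id].
Qed.

Lemma hf_continuous : continuous hf.
Proof.
rewrite /hf => x.
apply: (@continuous_max R R (fun _ => 0) (fun u : R => Num.min 1 (Num.min (2 * (u + 1)) (2 * (2 - u)))) x).
  exact: cst_continuous.
apply: (@continuous_min R R (fun _ => 1)); first exact: cst_continuous.
apply: continuous_min.
  have -> : (fun u : R => 2 * (u + 1)) = (fun u => 2 * u + 2).
    by apply: funext => u; rewrite mulrDr mulr1.
  exact: affine_continuous.
have -> : (fun u : R => 2 * (2 - u)) = (fun u => (-2) * u + 4).
  by apply: funext => u; rewrite mulrBr mulNr addrC; congr (_ + _); lra.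
exact: affine_continuous.
Qed.

Lemma hf_aff_continuous (M a : R) : continuous (fun x : R => hf (M * x - a)).
Proof.
move=> x; apply: (@continuous_comp _ _ _ (fun x : R => M * x - a) hf).
  exact: affine_continuous.
exact: hf_continuous.
Qed.

Definition gf m (a b : nat) (z : R * R) : R :=
  Num.min (hf ((2^m)%:R * z.1 - a%:R)) (hf ((2^m)%:R * z.2 - b%:R)).

Definition fS m (S : {set 'I_(2^m) * 'I_(2^m)}) (z : R * R) : R :=
  \big[Num.max/0]_(c in S) gf m c.1 c.2 z.

Arguments fS m S z : clear implicits.

Lemma fst_continuous : continuous (fun z : R * R => z.1).
Proof. by move=> z; exact: cvg_fst. Qed.

Lemma snd_continuous : continuous (fun z : R * R => z.2).
Proof. by move=> z; exact: cvg_snd. Qed.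

Lemma gf_continuous m a b : continuous (gf m a b).
Proof.
rewrite /gf => z.
apply: (@continuous_min R (R * R)%type (fun z : R * R => hf ((2^m)%:R * z.1 - a%:R)) (fun z : R * R => hf ((2^m)%:R * z.2 - b%:R)) z).
   apply: (@continuous_comp _ _ _ (fun z : R * R => z.1) (fun x => hf ((2^m)%:R * x - a%:R))).
    exact: fst_continuous.
  exact: hf_aff_continuous.
apply: (@continuous_comp _ _ _ (fun z : R * R => z.2) (fun x => hf ((2^m)%:R * x - b%:R))).
  exact: snd_continuous.
exact: hf_aff_continuous.
Qed.

Lemma big_max_continuous (T : topologicalType) (I : Type) (r : seq I) (P : pred I)
  (F : I -> T -> R) : (forall i, continuous (F i)) ->
  continuous (fun z => \big[Num.max/0]_(i <- r | P i) F i z).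
Proof.
move=> HF; elim: r => [|i r IH].
  by under eq_fun do rewrite big_nil; exact: cst_continuous.
have -> : (fun z => \big[Num.max/0]_(j <- i :: r | P j) F j z) =
  (fun z => if P i then Num.max (F i z) (\big[Num.max/0]_(j <- r | P j) F j z)
            else \big[Num.max/0]_(j <- r | P j) F j z).
  by apply: funext => z; rewrite big_cons.
case: (P i) => //.
move=> z; apply: (@continuous_max R T (F i) (fun z => \big[Num.max/0]_(j <- r | P j) F j z) z).
  exact: HF.
exact: IH.
Qed.

Lemma fS_continuous m S : continuous (fS m S).
Proof. by apply: big_max_continuous => c; exact: gf_continuous. Qed.

Lemma gf_measurable m a b : measurable_fun [set: R2 R] (gf m a b).
Proof.
rewrite /gf.
have h1 := measurableT_comp (continuous_measurable_fun (@hf_aff_continuous (2^m)%:R a%:R))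
  (@measurable_fst _ _ (measurableTypeR R) (measurableTypeR R)).
have h2 := measurableT_comp (continuous_measurable_fun (@hf_aff_continuous (2^m)%:R b%:R))
  (@measurable_snd _ _ (measurableTypeR R) (measurableTypeR R)).
exact: (measurable_minr h1 h2).
Qed.

Lemma big_max_measurable (I : Type) (r : seq I) (P : pred I)
  (F : I -> R2 R -> R) : (forall i, measurable_fun [set: R2 R] (F i)) ->
  measurable_fun [set: R2 R] (fun z => \big[Num.max/0]_(i <- r | P i) F i z).
Proof.
move=> HF; elim: r => [|i r IH].
  by under eq_fun do rewrite big_nil; exact: measurable_cst.
have -> : (fun z => \big[Num.max/0]_(j <- i :: r | P j) F j z) =
  (fun z => if P i then Num.max (F i z) (\big[Num.max/0]_(j <- r | P j) F j z)
            else \big[Num.max/0]_(j <- r | P j) F j z).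
  by apply: funext => z; rewrite big_cons.
case: (P i) => //.
exact: (@measurable_maxr _ _ _ _ (F i) (fun z => \big[Num.max/0]_(j <- r | P j) F j z)).
Qed.

Lemma fS_measurable m S : measurable_fun [set: R2 R] (fS m S).
Proof. by apply: big_max_measurable => c; exact: gf_measurable. Qed.

Lemma gf_ge0 m a b z : 0 <= gf m a b z.
Proof. by rewrite /gf le_min !hf_ge0. Qed.

Lemma gf_le1 m a b z : gf m a b z <= 1.
Proof. by rewrite /gf ge_min hf_le1. Qed.

Lemma gf_rect m a b z : gf m a b z != 0 -> rect m a b z.
Proof.
have M0 := M_gt0 R m.
rewrite /gf => H.
have [h1 h2] : hf ((2^m)%:R * z.1 - a%:R) != 0 /\ hf ((2^m)%:R * z.2 - b%:R) != 0.
  split; apply: contraNneq H => E; rewrite E.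
    by apply/eqP/min_idPl; exact: hf_ge0.
  by apply/eqP/min_idPr; exact: hf_ge0.
move/hf_out: h1 => /andP [u1 u2]; move/hf_out: h2 => /andP [v1 v2].
split; rewrite /= in_itv /=; apply/andP; split.
- by rewrite ler_pdivrMr // mulrC; lra.
- by rewrite ler_pdivlMr // mulrC; lra.
- by rewrite ler_pdivrMr // mulrC; lra.
- by rewrite ler_pdivlMr // mulrC; lra.
Qed.

Lemma fS_bounds m S z : 0 <= fS m S z <= \1_(thick m S) z.
Proof.
rewrite /fS; apply: (big_ind (fun x => 0 <= x <= \1_(thick m S) z)).
- by rewrite lexx indicE ler0n.
- move=> x y /andP [x0 x1] /andP [y0 y1].
  by rewrite le_max x0 /= ge_max x1 y1.
- move=> c cS; rewrite gf_ge0 /= indicE.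
  have [zt|zt] := boolP (z \in thick m S); first exact: gf_le1.
  rewrite le_eqVlt; apply/orP; left; apply/eqP; apply: contraNeq zt => /gf_rect zr.
  by rewrite in_setE; apply/in_bigsetU_fin; exists c.
Qed.

Lemma fS_ge m (S : {set 'I_(2^m) * 'I_(2^m)}) c z : c \in S -> gf m c.1 c.2 z <= fS m S z.
Proof. by move=> cS; rewrite /fS (bigD1 c) //= le_max lexx. Qed.

End Funs.
Arguments fS {R} m S z.

Lemma leb_sq (R : realType) (a b c d : R) : a < b -> c < d ->
  ((lebesgue_measure \x lebesgue_measure)%E (`[a, b[%classic `*` `[c, d[%classic : set (R2 R)) = ((b - a) * (d - c))%:E).
Proof.
move=> ab cd; rewrite product_measure1E; try exact: measurable_itv.
apply: (@eq_trans _ _ (lebesgue_measure (`[a, b[%classic : set R) * lebesgue_measure (`[c, d[%classic : set R))%E); first by [].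
by rewrite !lebesgue_measure_itv /= !lte_fin ab cd -!EFinB -EFinM.
Qed.

Section Integrals.
Variable R : realType.

Lemma cell_hf (N m : nat) (i : 'I_N) (x : R) : (2^m.+1 <= N)%N ->
  (i%:R / N%:R <= x)%R -> (x < i.+1%:R / N%:R)%R ->
  hf ((2^m)%:R * x - (cell_of m i : nat)%:R)%R = 1%R.
Proof.
move=> HN h1 h2.
have N0 : (0 < N)%N by apply: leq_ltn_trans (ltn_ord i).
have N0' : (0 < N%:R :> R)%R by rewrite ltr0n.
have M0 := M_gt0 R m.
rewrite /cell_of /=; set a := ((2^m * i) %/ N)%N.
have ha1 : (a * N <= 2^m * i)%N by apply: leq_trunc_div.
have ha2 : (2^m * i < a.+1 * N)%N by apply: ltn_ceil.
have ha1' : (a%:R * N%:R <= (2^m)%:R * i%:R :> R)%R by rewrite -!natrM ler_nat.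
have ha2' : ((2^m)%:R * i%:R < (a%:R + 1) * N%:R :> R)%R.
  by rewrite natr1 -!natrM ltr_nat.
have HN' : (2 * (2^m)%:R <= N%:R :> R)%R.
  by rewrite -[2%R]/(2%:R) -natrM ler_nat -expnS.
rewrite ler_pdivrMr // in h1.
rewrite -natr1 ltr_pdivlMr // in h2.
have p1 : ((2^m)%:R * i%:R <= (2^m)%:R * (x * N%:R) :> R)%R by rewrite ler_pM2l.
have p2 : ((2^m)%:R * (x * N%:R) < (2^m)%:R * (i%:R + 1) :> R)%R by rewrite ltr_pM2l.
apply: hf_one.
  have : (a%:R * N%:R <= ((2^m)%:R * x) * N%:R :> R)%R.
    by apply: (le_trans ha1'); rewrite -mulrA.
  rewrite ler_pM2r // => H; lra.
have : (((2^m)%:R * x) * N%:R < (a%:R + 3/2) * N%:R :> R)%R.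
  rewrite -mulrA; apply: (lt_trans p2); rewrite mulrDr mulr1.
  have : ((a%:R + 3/2) * N%:R = (a%:R + 1) * N%:R + N%:R / 2 :> R)%R by field.
  move=> ->; lra.
rewrite ltr_pM2r // => H; lra.
Qed.


Lemma sq_measurable : measurable (@unit_square R).
Proof. by rewrite /unit_square; apply: measurableX; exact: measurable_itv. Qed.

Lemma int_le (pi : {measure set (R2 R) -> \bar R}) m S :
  (\int[pi]_(z in @unit_square R) (fS m S z)%:E <= pi (thick m S `&` @unit_square R))%E.
Proof.
rewrite -(integral_indic pi sq_measurable (@measurable_thick R m S)).
apply: (ge0_le_integral pi sq_measurable).
- by move=> z _; rewrite lee_fin; case/andP: (@fS_bounds R m S z).
- by apply/measurable_EFinP; apply: measurable_funTS; exact: fS_measurable.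
- apply/measurable_EFinP; apply: measurable_funTS; apply: measurable_indic.
  exact: (@measurable_thick R m S).
- by move=> z _; rewrite lee_fin; case/andP: (@fS_bounds R m S z).
Qed.


Lemma int_ge (N m : nat) (s : 'S_N) : (2^m.+1 <= N)%N ->
  (((LIS s)%:R / N%:R)%:E <=
  \int[perm_permuton R s]_(z in @unit_square R) (fS m (cells m s) z)%:E)%E.
Proof.
move=> HN.
have N0 : (0 < N)%N by apply: leq_trans HN; rewrite expn_gt0.
have N0' : (0 < N%:R :> R)%R by rewrite ltr0n.
pose hsq (i : 'I_N) : set (R2 R) :=
  `[i%:R / N%:R, i.+1%:R / N%:R[%classic `*` `[(s i)%:R / N%:R, (s i).+1%:R / N%:R[%classic.
pose U := \big[setU/set0]_(i < N | i \in Imax s) hsq i.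
have hsqm i : measurable (hsq i) by apply: measurableX; exact: measurable_itv.
have Um : measurable U by apply: bigsetU_measurable.
have step1 : (\int[perm_permuton R s]_(z in @unit_square R) (\1_U z)%:E <=
    \int[perm_permuton R s]_(z in @unit_square R) (fS m (cells m s) z)%:E)%E.
  apply: (ge0_le_integral (perm_permuton R s) sq_measurable).
  - by move=> z _; rewrite lee_fin indicE.
  - by apply/measurable_EFinP; apply: measurable_funTS; exact: measurable_indic.
  - by apply/measurable_EFinP; apply: measurable_funTS; exact: fS_measurable.
  - move=> z _; rewrite lee_fin indicE; have [zU|zU] := boolP (z \in U); last first.
      by case/andP: (@fS_bounds R m (cells m s) z).
    move: zU; rewrite in_setE => /in_bigsetU [i [_ Ii [hx hy]]].
    have cS : (cell_of m i, cell_of m (s i)) \in cells m s.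
      by apply/imsetP; exists i.
    apply: le_trans (@fS_ge R m (cells m s) _ z cS).
    move: hx hy; rewrite /= !in_itv /= => /andP [x1 x2] /andP [y1 y2].
    by rewrite /gf /= (cell_hf HN x1 x2) (cell_hf HN y1 y2) minxx.
rewrite (integral_indic _ sq_measurable Um) in step1.
apply: le_trans step1.
have sub01 (k : 'I_N) (x : R) : x \in `[k%:R / N%:R, k.+1%:R / N%:R[ -> x \in `[0, 1].
  rewrite !in_itv /= => /andP [h1 h2]; apply/andP; split.
    by apply: le_trans h1; rewrite divr_ge0.
  apply: ltW; apply: (lt_le_trans h2); rewrite ler_pdivrMr // mul1r ler_nat.
  exact: ltn_ord.
have subc (a b x : R) : x \in `[a, b[ -> x \in `[a, b].
  by rewrite !in_itv /= => /andP [-> /ltW ->].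
have -> : (U `&` @unit_square R) = U.
  apply/seteqP; split => [z [] //|z Uz]; split => //.
  move: Uz => /in_bigsetU [i [_ Ii [hx hy]]].
  by split; [exact: (sub01 i)|exact: (sub01 (s i))].
rewrite /perm_permuton /= /mscale /= /mrestr /=.
have -> : U `&` perm_support s = U.
  apply/seteqP; split => [z [] //|z Uz]; split => //.
  move: Uz => /in_bigsetU [i [_ Ii [hx hy]]].
  apply/in_bigsetU; exists i; split; [exact: mem_index_enum| by []|].
  by rewrite /perm_square; split => /=; apply: subc.
have triv : trivIset setT hsq.
  move=> i j _ _ [z [[hi _] [hj _]]].
  move: hi hj; rewrite /= !in_itv /= => /andP [i1 i2] /andP [j1 j2].
  rewrite ler_pdivrMr // in i1; rewrite ltr_pdivlMr // in i2.
  rewrite ler_pdivrMr // in j1; rewrite ltr_pdivlMr // in j2.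
  have ij : (i%:R < j.+1%:R :> R)%R by apply: (le_lt_trans i1).
  have ji : (j%:R < i.+1%:R :> R)%R by apply: (le_lt_trans j1).
  rewrite ltr_nat in ij; rewrite ltr_nat in ji.
  by apply/val_inj/eqP; rewrite eqn_leq; apply/andP; split; rewrite -ltnS.
rewrite (measure_bigsetU_ord _ (fun i => i \in Imax s) hsqm triv).
have E (i : 'I_N) : ((lebesgue_measure \x lebesgue_measure)%E (hsq i) =
    ((N%:R)^-1 * (N%:R)^-1)%:E :> \bar R).
  have lt1 (k : nat) : (k%:R / N%:R < k.+1%:R / N%:R :> R)%R.
    by rewrite ltr_pM2r ?invr_gt0 // ltr_nat.
  rewrite leb_sq //; congr EFin.
  have d1 (k : nat) : (k.+1%:R / N%:R - k%:R / N%:R = (N%:R)^-1 :> R)%R.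
    by rewrite -mulrBl -natrB // subSnn mul1r.
  by rewrite !d1.
rewrite (eq_bigr (fun _ => ((N%:R)^-1 * (N%:R)^-1)%:E)); last by move=> i _; exact: E.
rewrite sumEFin sumr_const -EFinM lee_fin (ImaxP s).2.
rewrite le_eqVlt; apply/orP; left; apply/eqP.
rewrite -mulr_natr; field.
by rewrite pnatr_eq0 -lt0n.
Qed.

End Integrals.
Unset Implicit Arguments.

Theorem proposition3p2 (R : realType)
  (pi : {measure set (R2 R) -> \bar R})
  (N : nat -> nat) (sigma : forall k : nat, 'S_(N k)) :
  is_permuton pi ->
  ((fun k => (N k)%:R : R) @ \oo --> +oo) ->
  weak_cvg (fun k => perm_permuton R (sigma k)) pi ->
  (forall A : set (R2 R), measurable A -> monotone_set A -> pi A = 0%E) ->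
  (fun k => (LIS (sigma k))%:R / (N k)%:R : R) @ \oo --> 0.
Proof.
move=> [pi1 pi2] HN Hw Hmono.
set u := fun k => (LIS (sigma k))%:R / (N k)%:R : R.
have u0 k : 0 <= u k by rewrite /u divr_ge0.
have piT : pi setT = 1%E.
  have -> : (setT : set (R2 R)) = setT `*` setT.
    by apply/seteqP; split => // z.
  rewrite pi1 //= setTI lebesgue_measure_itv /= lte01 -EFinB subr0 //.
apply: contrapT => Hnot.
have [e [e0 He]] : exists e : R, 0 < e /\ infinite_nat (fun k => e <= u k).
  apply: contrapT => H; apply: Hnot; apply/cvgrPdist_lt => e e0.
  have : ~ infinite_nat (fun k => e <= u k) by move=> Hi; apply: H; exists e.
  move=> /existsNP [n /forallNP Hn].
  exists n => // k /= nk.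
  rewrite sub0r normrN ger0_norm // ltNge; apply/negP => h.
  by apply: (Hn k); split.
have [S HS] := @chain_lemma (fun m => {set 'I_(2^m) * 'I_(2^m)} : finType)
  (fun m k => cells m (sigma k)) _ He.
have fiber m k : (forall j, (j <= m)%N -> cells j (sigma k) = S j) ->
    cells m (sigma k) = S m.
  by move=> H; apply: H.
have key m : (e%:E <= pi (thick m (S m) `&` @unit_square R))%E.
  apply: le_trans (@int_le R pi m (S m)).
  have Hc := Hw (fS m (S m)) (continuous_subspaceT (@fS_continuous R m (S m))).
  have [n0 Hn0] : exists n0, forall k, (n0 <= k)%N -> (2^m.+1 <= N k)%N.
    have := (cvgryPge _).1 HN (2^m.+1)%:R.
    move=> [n0 _ Hn0]; exists n0 => k kn; rewrite -(ler_nat R); exact: Hn0.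
  have phiP n : exists k, (maxn n n0 <= k)%N /\ ((e <= u k) /\
      (forall j, (j <= m)%N -> cells j (sigma k) = S j)).
    exact: HS.
  have [phi Hphi] := choice phiP.
  have phin n : (n <= phi n)%N.
    by have [h _] := Hphi n; apply: leq_trans h; apply: leq_maxl.
  have Hc' : (fun n => (\int[perm_permuton R (sigma (phi n))]_(x in @unit_square R)
      (fS m (S m) x)%:E)%E) @ \oo --> (\int[pi]_(x in @unit_square R) (fS m (S m) x)%:E)%E.
    have phiI : phi n @[n --> \oo] --> \oo.
      move=> A [N0 _ HA]; exists N0 => // n /= Hn; apply: HA.
      exact: leq_trans Hn (phin n).
    exact: (cvg_comp _ _ phiI Hc).
  apply: (cvge_to_ge Hc'); apply: nearW => n.
  have [h1 [h2 h3]] := Hphi n.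
  have hN : (2^m.+1 <= N (phi n))%N.
    by apply: Hn0; apply: leq_trans h1; apply: leq_maxr.
  rewrite -(fiber m (phi n) h3).
  apply: le_trans (@int_ge R (N (phi n)) m (sigma (phi n)) hN); rewrite lee_fin.
  exact: h2.
have pick m : exists k, forall j, (j <= m)%N -> cells j (sigma k) = S j.
  by have [k [_ [_ H]]] := HS m 0%N; exists k.
have nest m : thick m.+1 (S m.+1) `<=` thick m (S m).
  apply: thick_nest => c cS.
  have [k Hk] := pick m.+1.
  rewrite -(Hk m.+1 (leqnn _)) in cS.
  have [c0 c0S E] := cells_parent cS.
  by exists c0 => //; rewrite -(Hk m (leqnSn _)).
have ord m : forall c c', c \in S m -> c' \in S m ->
    ((c.1 <= c'.1 /\ c.2 <= c'.2) \/ (c'.1 <= c.1 /\ c'.2 <= c.2))%N.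
  have [k Hk] := pick m.
  rewrite -(Hk m (leqnn _)); exact: cells_ord.
pose G m := thick m (S m) `&` @unit_square R.
have Gm m : measurable (G m).
  by apply: measurableI; [exact: measurable_thick|exact: sq_measurable].
have Gdec : nonincreasing_seq G.
  apply/nonincreasing_seqP => m; apply/subsetPset => z [zt zs]; split => //.
  exact: nest.
have Cm : measurable (\bigcap_m G m).
  by apply: bigcap_measurable; [exists 0%N|move=> k _; exact: Gm].
have G0 : (pi (G 0%N) < +oo)%E.
  apply: (le_lt_trans (le_measure pi _ _ (@subsetT _ (G 0%N)))); rewrite ?inE //.
  apply: (@eq_ind _ 1%E (fun x => (x < +oo)%E)); [exact: ltry|symmetry; exact: piT].
have Hlim := nonincreasing_cvg_mu G0 Gm Cm Gdec.
have eC : (e%:E <= pi (\bigcap_m G m))%E.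
  by apply: (cvge_to_ge Hlim); apply: nearW => m; exact: key.
have monoC : monotone_set (\bigcap_m G m).
  split; first by move=> z Cz; have [] := Cz 0%N I.
  move=> t s Cts [t' s'] Cz'.
  have Hm m := thick_ord (ord m) (Cts m I).1 (Cz' m I).1.
  have [] := @final_ord R (t - t') (s - s').
  - move=> m; have := Hm m; rewrite /= !opprB; exact.
  - move=> [h1 h2]; left; have [a1 b1] := (Cz' 0%N I).2.
    move: a1 b1; rewrite /= !in_itv /= => /andP [a1 _] /andP [b1 _].
    by split => /=; apply/andP; split; lra.
  - move=> [h1 h2]; right; have [a1 b1] := (Cz' 0%N I).2.
    move: a1 b1; rewrite /= !in_itv /= => /andP [_ a2] /andP [_ b2].
    by split => /=; apply/andP; split; lra.
have := Hmono _ Cm monoC; move=> H0; rewrite H0 lee_fin in eC.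
by move: e0; rewrite ltNge eC.
Qed.
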